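(* For all binary words $\mathfrak{s},\mathfrak{t}$ over $\{\mathsf{A},\mathsf{B}\}$, \[ \mathsf{P}(\mathfrak{s}\circ\mathfrak{t}) = \mathsf{P}_{\mathsf{A}}(\mathfrak{s})\,\mathsf{P}^{\mathsf{B}}(\mathfrak{t}) + \mathsf{P}_{\mathsf{B}}(\mathfrak{s})\,\mathsf{P}^{\mathsf{A}}(\mathfrak{t}) - 1. \]
   Context: $\circ$ denotes concatenation. For a word $\mathfrak{s}$, $\mathsf{P}(\mathfrak{s})$ is the number of distinct words that are subsequences (not necessarily contiguous) of $\mathfrak{s}$, the empty word included. $\mathsf{P}^{\mathsf{A}}(\mathfrak{s})$ (resp. $\mathsf{P}^{\mathsf{B}}(\mathfrak{s})$) is the number of distinct subsequences of $\mathfrak{s}$ that start with $\mathsf{A}$ (resp. $\mathsf{B}$), plus one for the empty subsequence; $\mathsf{P}_{\mathsf{A}}(\mathfrak{s})$ (resp. $\mathsf{P}_{\mathsf{B}}(\mathfrak{s})$) is the number of distinct subsequences of $\mathfrak{s}$ that end with $\mathsf{A}$ (resp. $\mathsf{B}$), plus one for the empty subsequence. *)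

(* Defs.v *)
From HB Require Import structures.
From mathcomp Require Import all_boot.
Set Implicit Arguments. Unset Strict Implicit. Unset Printing Implicit Defensive.

Inductive letter := A | B.

Definition letter_eqb (x y : letter) : bool :=
  match x, y with A, A | B, B => true | _, _ => false end.
Lemma letter_eqP : Equality.axiom letter_eqb.
Proof. by case; case; constructor. Qed.
HB.instance Definition _ := hasDecEq.Build letter letter_eqP.

Definition word := seq letter.

Fixpoint subseqs (s : word) : seq word :=
  match s with
  | [::] => [:: [::]]
  | x :: s' => [seq x :: w | w <- subseqs s'] ++ subseqs s'
  end.

Definition dsubseqs (s : word) : seq word := undup (subseqs s).

(* P(s): number of distinct subsequences, empty one included. *)
Definition Pc (s : word) : nat := size (dsubseqs s).

Definition starts_with (a : letter) (w : word) : bool :=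
  if w is x :: _ then x == a else false.
Definition ends_with (a : letter) (w : word) : bool :=
  if w is x :: w' then last x w' == a else false.

(* P^a(s): distinct subsequences starting with a, plus one (empty). *)
Definition Pstart (a : letter) (s : word) : nat :=
  (count (starts_with a) (dsubseqs s)).+1.
(* P_a(s): distinct subsequences ending with a, plus one (empty). *)
Definition Pend (a : letter) (s : word) : nat :=
  (count (ends_with a) (dsubseqs s)).+1.

Lemma mem_subseqs (s w : word) : (w \in subseqs s) = subseq w s.
Proof.
elim: s w => [|x s IH] w; first by case: w.
rewrite /= mem_cat IH; case: w => [|y w] /=; first by rewrite sub0seq orbT.
case: eqP => [->|ne].
  apply/orP/idP => [[/mapP[v vin [->]]|h]|h].
  - by rewrite -IH.
  - exact: subseq_trans (subseq_cons w x) h.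
  - by left; apply/mapP; exists w; rewrite ?IH.
have -> : (y :: w \in [seq x :: w0 | w0 <- subseqs s]) = false.
  by apply/negbTE/mapP => -[v _ [e _]]; case: ne.
by [].
Qed.

(* Main.v *)
Require Import Defs.
From mathcomp Require Import all_boot zify.

Lemma countG (f : word -> word) (P Q : pred word) (l1 l2 : seq word) :
  injective f ->
  (forall w, (Q w && (w \in l2)) = (w \in [seq f u | u <- l1 & P u])) ->
  count Q (undup l2) = count P (undup l1).
Proof.
move=> finj H; rewrite -!size_filter -[RHS](size_map f).
apply: perm_size; apply: uniq_perm.
- exact: filter_uniq (undup_uniq _).
- by rewrite map_inj_uniq //; exact: filter_uniq (undup_uniq _).
move=> w; rewrite mem_filter mem_undup H.
apply: eq_mem_map => u; by rewrite !mem_filter mem_undup.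
Qed.

Lemma ends_rev a u : ends_with a u = starts_with a (rev u).
Proof.
case/lastP: u => [|v z] //; rewrite rev_rcons /=.
by case: v => [|y v] //=; rewrite last_rcons.
Qed.

Lemma Pend_rev a s : Pend a s = Pstart a (rev s).
Proof.
rewrite /Pend /Pstart /dsubseqs; congr S; symmetry.
apply: (@countG rev); first exact: (can_inj (@revK _)).
move=> w; apply/idP/idP.
- case/andP=> sw; rewrite mem_subseqs => ws; apply/mapP; exists (rev w); last by rewrite revK.
  by rewrite mem_filter mem_subseqs ends_rev revK sw /= -subseq_rev revK.
- case/mapP=> u; rewrite mem_filter mem_subseqs => /andP[eu us] ->.
  by rewrite -ends_rev eu subseq_rev -mem_subseqs.
Qed.

Lemma Pc_rev s : Pc s = Pc (rev s).
Proof.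
rewrite /Pc /dsubseqs -!count_predT.
apply: (@countG rev); first exact: (can_inj (@revK _)).
move=> w; apply/idP/idP.
- rewrite /= mem_subseqs => ws; apply/mapP; exists (rev w); last by rewrite revK.
  by rewrite mem_filter mem_subseqs -subseq_rev !revK.
- case/mapP=> u; rewrite mem_filter mem_subseqs => /andP[_ us] ->.
  by rewrite /= -[s]revK subseq_rev -mem_subseqs.
Qed.

Lemma Pstart_same x t : Pstart x (x :: t) = (Pc t).+1.
Proof.
rewrite /Pstart /Pc /dsubseqs -count_predT; congr S.
apply: (@countG (cons x)); first by move=> ? ? [].
move=> w; rewrite mem_subseqs; case: w => [|y w] /=; first by apply/esym/mapP => -[].
case: eqP => [->|ne] /=.
  by rewrite mem_map; [rewrite mem_filter mem_subseqs | move=> ? ? []].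
by apply/esym/mapP => -[u _ [e _]]; case: ne.
Qed.

Lemma Pstart_diff x y t : x != y -> Pstart y (x :: t) = Pstart y t.
Proof.
move=> ne; rewrite /Pstart /dsubseqs; congr S.
apply: (@countG id) => // w.
rewrite map_id mem_filter /= mem_cat; case: w => [|z w] //=.
case: eqP => [->|] //=; have -> // : (y :: w \in [seq x :: w0 | w0 <- subseqs t]) = false.
by apply/negbTE/mapP => -[u _ [e _]]; move: ne; rewrite e eqxx.
Qed.

Lemma size_split (l : seq word) :
  size l = count (starts_with A) l + count (starts_with B) l + count (pred1 [::]) l.
Proof.
elim: l => [|w l IH] //=; rewrite IH.
case: w => [|[] w] /=; rewrite ?addnS ?addSn //; lia.
Qed.

Lemma Pc_split t : (Pc t).+1 = Pstart A t + Pstart B t.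
Proof.
rewrite /Pc /Pstart size_split count_uniq_mem ?undup_uniq //.
rewrite mem_undup mem_subseqs sub0seq /=; lia.
Qed.

Lemma Pc_split_end s : (Pc s).+1 = Pend A s + Pend B s.
Proof. by rewrite !Pend_rev Pc_rev Pc_split. Qed.

Theorem theorem2 (s t : word) :
  Pc (s ++ t) = Pend A s * Pstart B t + Pend B s * Pstart A t - 1.
Proof.
elim: t s => [|x t IH] s.
  rewrite cats0 /Pstart /dsubseqs /= !muln1.
  have := Pc_split_end s; lia.
rewrite -cat_rcons IH.
have Hs := Pc_split_end s; have Ht := Pc_split t.
have E1 : Pend x (rcons s x) = (Pc s).+1.
  by rewrite Pend_rev rev_rcons Pstart_same -Pc_rev.
have E2 : forall y, x != y -> Pend y (rcons s x) = Pend y s.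
  by move=> y ne; rewrite !Pend_rev rev_rcons Pstart_diff.
case: x E1 E2 => E1 E2.
- rewrite E1 (E2 B) // Pstart_same (@Pstart_diff A B) //; nia.
- rewrite E1 (E2 A) // Pstart_same (@Pstart_diff B A) //; nia.
Qed.
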